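(* For positive integers $f,l$ consider the hypercube Hamiltonian $H=\sum_{C}\bigl(\sum_{i\in C}S_i-M_C\bigr)^2$ with integers $M_C$ (notation as in the context), and let $n_{ze}$ be the number of zero energy assignments. (i) If $n_{ze}>0$, then the number of global minima of $H$ equals $n_{ze}$. (ii) There is an absolute constant $c>0$ such that for all positive integers $f,l$ there exists a choice of integers $(M_C)_C$ with $$n_{ze}\geq 2^N\Bigl(\frac{c}{f\sqrt{l}}\Bigr)^{n_C}.$$
   Context: Fix positive integers $f,l$ and let $N=l^f$. The variables $S_i\in\{-1,+1\}$ are indexed by vectors $i=(x_1,\dots,x_f)$ with $x_a\in\{1,\dots,l\}$. A column $C$ is specified by an index $b\in\{1,\dots,f\}$ and integers $y_a\in\{1,\dots,l\}$ for all $a\neq b$; a variable $(x_1,\dots,x_f)$ lies in $C$ iff $x_a=y_a$ for all $a\neq b$. The number of columns is $n_C=f\,l^{f-1}$. Given an integer $M_C$ for each column, $H(S)=\sum_C\bigl(\sum_{i\in C}S_i-M_C\bigr)^2$. A zero energy assignment is an $S$ with $\sum_{i\in C}S_i=M_C$ for every column $C$. A global minimum is an assignment minimizing $H$. *)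

(* Defs.v *)
From mathcomp Require Import all_boot all_order all_algebra.
Set Implicit Arguments. Unset Strict Implicit. Unset Printing Implicit Defensive.
Import GRing.Theory Num.Theory.

(* A variable index i = (x_1,...,x_f), coordinates in {1..l} encoded as 'I_l. *)
Definition site (f l : nat) := {ffun 'I_f -> 'I_l}.

(* A column: a direction b and values y_a for every a <> b. *)
Definition column (f l : nat) :=
  {b : 'I_f & {ffun {a : 'I_f | a != b} -> 'I_l}}.

Definition in_col (f l : nat) (C : column f l) (i : site f l) : bool :=
  [forall a : {a : 'I_f | a != tag C}, i (val a) == tagged C a].

Definition assignment (f l : nat) := {ffun site f l -> bool}.

Definition spin (b : bool) : int := if b then 1%R else (-1)%R.

Definition col_sum (f l : nat) (S : assignment f l) (C : column f l) : int :=
  (\sum_(i : site f l | in_col C i) spin (S i))%R.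

Definition H (f l : nat) (M : column f l -> int) (S : assignment f l) : int :=
  (\sum_(C : column f l) (col_sum S C - M C) ^+ 2)%R.

Definition zero_energy (f l : nat) (M : column f l -> int) (S : assignment f l) : bool :=
  [forall C : column f l, col_sum S C == M C].

Definition global_min (f l : nat) (M : column f l -> int) (S : assignment f l) : bool :=
  [forall S' : assignment f l, (H M S <= H M S')%R].

Definition n_ze (f l : nat) (M : column f l -> int) : nat :=
  #|[set S : assignment f l | zero_energy M S]|.

Definition n_min (f l : nat) (M : column f l -> int) : nat :=
  #|[set S : assignment f l | global_min M S]|.

Definition nVars (f l : nat) : nat := (l ^ f)%N.
Definition nCols (f l : nat) : nat := (f * l ^ (f - 1))%N.

(* Main.v *)
Require Import Defs.
From mathcomp Require Import all_boot all_order all_algebra.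
From Stdlib Require Import Reals.
From mathcomp Require Import Rstruct.
From mathcomp Require Import zify ring lra.
Import Order.TTheory GRing.Theory Num.Theory.
Set Implicit Arguments. Unset Strict Implicit. Unset Printing Implicit Defensive.
Open Scope ring_scope.


Lemma H_ge0 f l (M : column f l -> int) S : 0 <= H M S.
Proof. by apply: sumr_ge0 => C _; exact: sqr_ge0. Qed.

Lemma H_eq0 f l (M : column f l -> int) S : (H M S == 0) = zero_energy M S.
Proof.
apply/eqP/forallP => [h C | h].
  have := psumr_eq0P (fun C _ => sqr_ge0 (col_sum S C - M C)) h (i:=C) isT.
  by move/eqP; rewrite sqrf_eq0 subr_eq0.
by apply: big1 => C _; rewrite (eqP (h C)) subrr expr0n.
Qed.

Lemma part1 f l (M : column f l -> int) : (0 < n_ze M)%nat -> n_min M = n_ze M.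
Proof.
rewrite /n_ze /n_min => /card_gt0P [S0]; rewrite inE => hS0.
apply: eq_card => S; rewrite !inE.
apply/forallP/idP => [h | hS S'].
  by rewrite -H_eq0 eq_le H_ge0 andbT (le_trans (h S0)) // (eqP _ : H M S0 = 0) ?H_eq0.
by rewrite (eqP (_ : H M S == 0)) ?H_eq0 // H_ge0.
Qed.


Lemma card_col f l (C : column f l) : (#|[pred i | in_col C i]| <= l)%nat.
Proof.
rewrite -(card_in_imset (f := fun i : site f l => i (tag C))).
  by apply: leq_trans (max_card _) _; rewrite card_ord.
move=> i j; rewrite !inE => /forallP hi /forallP hj hij.
apply/ffunP => a; case: (eqVneq a (tag C)) => [->//|ha].
have := hi (exist _ a ha); have := hj (exist _ a ha).
by move=> /eqP /= -> /eqP /= ->.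
Qed.

Lemma spin_norm b : `|spin b| = 1.
Proof. by case: b. Qed.

Lemma spin_sq b : spin b * spin b = 1.
Proof. by case: b. Qed.

Lemma col_sum_abs f l (S : assignment f l) C : `|col_sum S C| <= l%:R.
Proof.
apply: le_trans (ler_norm_sum _ _ _) _.
under eq_bigr do rewrite spin_norm.
rewrite sumr_const ler_nat; exact: card_col.
Qed.

Definition flip f l (i : site f l) (S : assignment f l) : assignment f l :=
  [ffun k => if k == i then ~~ S k else S k].

Lemma flipK f l (i : site f l) : involutive (flip i).
Proof. by move=> S; apply/ffunP => k; rewrite !ffunE; case: eqP => // _; rewrite negbK. Qed.

Lemma pair_sum f l (i j : site f l) :
  \sum_(S : assignment f l) spin (S i) * spin (S j) =
  if i == j then (#|{: assignment f l}|)%:R else 0.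
Proof.
case: eqVneq => [<-|hij].
  by under eq_bigr do rewrite spin_sq; rewrite sumr_const.
set s := \sum_S _.
have hs : s = - s.
  rewrite /s [LHS](reindex_inj (inv_inj (flipK i))) -sumrN.
  have hji : (j == i) = false by rewrite eq_sym (negbTE hij).
  apply: eq_bigr => S _; rewrite !ffunE eqxx hji.
  by case: (S i); case: (S j).
move: hs; lia.
Qed.

Lemma var_col f l (C : column f l) :
  \sum_(S : assignment f l) (col_sum S C)^+2 =
  (#|[pred i | in_col C i]| * #|{: assignment f l}|)%:R.
Proof.
under eq_bigr do rewrite expr2 /col_sum big_distrlr /=.
rewrite exchange_big /=.
under eq_bigr do rewrite exchange_big /=.
under eq_bigr => i Pi do under eq_bigr do rewrite pair_sum.
transitivity (\sum_(i | in_col C i) (#|{: assignment f l}|)%:R : int).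
  apply: eq_bigr => i Pi; rewrite (bigD1 i) //= eqxx big1 ?addr0 // => j /andP [_ hj].
  by rewrite eq_sym (negbTE hj).
by rewrite sumr_const [in RHS]mulnC natrM mulr_natr.
Qed.


Definition ex (x : R) : R := exp x.
Arguments ex x%_ring_scope.

Lemma ex_ge1D (x : R) : 1 + x <= ex x.
Proof. by apply/RleP; exact: exp_ineq1_le. Qed.

Lemma ex_gt0 (x : R) : 0 < ex x.
Proof. by apply/RltP; exact: exp_pos. Qed.

Lemma exD (x y : R) : ex (x + y) = ex x * ex y.
Proof. by rewrite /ex expRD. Qed.

Lemma ex0 : ex 0 = 1.
Proof. exact: expR0. Qed.

Lemma exN (x : R) : ex (- x) = (ex x)^-1.
Proof. exact: exp_Ropp. Qed.

Lemma exX (x : R) n : ex x ^+ n = ex (x *+ n).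
Proof. exact: expRX. Qed.

Lemma ex_sum (I : finType) (F : I -> R) :
  ex (\sum_i F i) = \prod_i ex (F i).
Proof. exact: (big_morph ex exD ex0). Qed.

Lemma jensen (I : finType) (Y : I -> R) (a : R) :
  - (#|I|%:R * a) <= \sum_i Y i -> #|I|%:R * ex (- a) <= \sum_i ex (Y i).
Proof.
move=> h.
have e i : ex (Y i) = ex (- a) * ex (Y i + a).
  by rewrite -exD; congr ex; lra.
under eq_bigr do rewrite e.
rewrite -mulr_sumr mulrC ler_pM2l ?ex_gt0 //.
apply: le_trans (ler_sum _ (fun i _ => ex_ge1D (Y i + a))).
rewrite !big_split /= sumr_const (sumr_const _ a) -mulr_natl.
lra.
Qed.

Lemma geom (r : R) n : 0 <= r < 1 -> \sum_(i < n) r ^+ i <= (1 - r)^-1.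
Proof.
case/andP => r0 r1.
have h : (1 - r) * \sum_(i < n) r ^+ i = 1 - r ^+ n.
  by move: (subrX1 r n); rewrite !mulrBl !mul1r => H; lra.
have hp : 0 < 1 - r by lra.
rewrite -(ler_pM2l hp) h mulfV ?gt_eqF //.
by rewrite gerBl exprn_ge0.
Qed.

Lemma r_bound (s : R) : 0 < s -> (1 - ex (- s^-1))^-1 <= s + 1.
Proof.
move=> s0.
have he : 1 + s^-1 <= ex s^-1 := ex_ge1D _.
have hr : ex (- s^-1) = (ex s^-1)^-1 by rewrite exN.
set e := ex s^-1 in he hr *.
have si : s * s^-1 = 1 by rewrite mulfV ?gt_eqF.
have sinv : 0 < s^-1 by rewrite invr_gt0.
have e1 : 0 < e - 1 by lra.
have e0 : 0 < e by lra.
have q : 1 - e^-1 = (e - 1) / e by rewrite mulrBl mulfV ?gt_eqF // mul1r.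
rewrite hr q.
rewrite invf_div ler_pdivrMr //.
have : s * (e - 1 - s^-1) >= 0 by rewrite mulr_ge0 //; lra.
rewrite !mulrBr si; lra.
Qed.

Lemma pow_exp (s : R) n : ex (- (n%:R / s)) = ex (- s^-1) ^+ n.
Proof. by rewrite exX mulNrn mulr_natl. Qed.

Lemma term_eq (s : R) (z : int) :
  ex (- (`|(z%:~R : R)| / s)) = ex (- s^-1) ^+ (absz z).
Proof. by rewrite -intr_norm -abszE -pow_exp. Qed.

Lemma B_bound (l : nat) (s : R) : 1 <= s ->
  \sum_(k < (2 * l).+1) ex (- (`|(((k:nat)%:Z - l%:Z)%:~R : R)| / s)) <= 4 * s.
Proof.
move=> s1; have s0 : 0 < s by lra.
set r := ex (- s^-1).
have r0 : 0 <= r by apply: ltW; exact: ex_gt0.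
have r1 : r < 1.
  rewrite /r exN invf_lt1 ?ex_gt0 //.
  have := ex_ge1D s^-1; have : 0 < s^-1 by rewrite invr_gt0.
  lra.
have r01 : 0 <= r < 1 by rewrite r0 r1.
have rb := r_bound s0; rewrite -/r in rb.
under eq_bigr do rewrite term_eq -/r.
rewrite -(big_mkord xpredT (fun k => r ^+ absz (k%:Z - l%:Z))).
rewrite (big_cat_nat _ (n := l.+1)) //=; last by lia.
have h1 : \sum_(0 <= k < l.+1) r ^+ absz (k%:Z - l%:Z) = \sum_(0 <= k < l.+1) r ^+ k.
  rewrite big_nat_rev /=; apply: eq_big_nat => k /andP [_ hk]; congr (_ ^+ _); lia.
rewrite h1 big_mkord.
rewrite [X in _ + X](_ : _ = \sum_(0 + l.+1 <= i < (2 * l).+1) r ^+ absz (i%:Z - l%:Z)) //.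
rewrite big_addn big_mkord.
have h2 : \sum_(i < (2 * l).+1 - l.+1) r ^+ absz ((i + l.+1)%:Z - l%:Z)
          <= \sum_(i < (2 * l).+1 - l.+1) r ^+ i.
  apply: ler_sum => i _.
  rewrite (_ : absz _ = i.+1); last by lia.
  by rewrite exprS ler_piMl ?exprn_ge0 // ltW.
have g1 := geom l.+1 r01; have g2 := geom ((2 * l).+1 - l.+1) r01.
lra.
Qed.


Definition emb f l (M : {ffun column f l -> 'I_(2 * l).+1}) : column f l -> int :=
  fun C => (M C : nat)%:Z - l%:Z.

Definition phi f l (S : assignment f l) : {ffun column f l -> 'I_(2 * l).+1} :=
  [ffun C => inord (absz (col_sum S C + l%:Z))].

Lemma emb_phi f l (S : assignment f l) C : emb (phi S) C = col_sum S C.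
Proof.
have := col_sum_abs S C; rewrite /emb ffunE => h.
rewrite inordK; lia.
Qed.

Lemma leq_bigmax' (I : finType) (F : I -> nat) (i : I) : (F i <= \big[maxn/0%nat]_(j : I) F j)%nat.
Proof. exact: leq_bigmax. Qed.

Lemma group_bound f l (w : int -> R) (hw : forall z, 0 <= w z) :
  \sum_(S : assignment f l) \prod_(C : column f l) w (col_sum S C) <=
  (\big[maxn/0%nat]_(M : {ffun column f l -> 'I_(2 * l).+1}) n_ze (emb M))%:R *
  \prod_(C : column f l) \sum_(k < (2 * l).+1) w ((k : nat)%:Z - l%:Z).
Proof.
set nmax := (\big[maxn/0%nat]_(M : {ffun column f l -> 'I_(2 * l).+1}) n_ze (emb M)).
have hM : forall M : {ffun column f l -> 'I_(2 * l).+1}, (n_ze (emb M) <= nmax)%nat.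
  move=> M. exact: (leq_bigmax' (fun M => n_ze (emb M)) M).
under eq_bigr do under eq_bigr do rewrite -emb_phi.
rewrite (partition_big (fun S => phi S) xpredT) //=.
rewrite (bigA_distr_bigA) /= mulr_sumr.
apply: ler_sum => M _.
rewrite (eq_bigr (fun S => \prod_C w (emb M C))); last by move=> S /eqP ->.
rewrite sumr_const -[X in X <= _]mulr_natl ler_wpM2r ?prodr_ge0 // ler_nat.
apply: (leq_trans _ (hM M)).
apply: subset_leq_card; apply/subsetP => S hS; have {}hS : phi S = M by apply/eqP.
by rewrite inE; apply/forallP => C; rewrite -hS emb_phi.
Qed.


Lemma eq_bigmax' (I : finType) (F : I -> nat) : (0 < #|I|)%nat ->
  exists i, \big[maxn/0%nat]_(j : I) F j = F i.
Proof. by move=> h; case: (@bigop.eq_bigmax I F h) => i hi; exists i. Qed.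

Lemma abs_div_le (x s L : R) : 0 < s -> s ^+ 2 = L ->
  `|x| / s <= (1 + x ^+ 2 / L) / 2.
Proof.
move=> s0 sL.
have hx : `|x| ^+ 2 = x ^+ 2 by rewrite real_normK ?num_real.
rewrite -sL -hx -expr_div_n.
set t := `|x| / s.
have h : 0 <= (t - 1) ^+ 2 := sqr_ge0 _.
move: h; rewrite !expr2 => h.
nra.
Qed.

Lemma var_real f l (C : column f l) :
  \sum_(S : assignment f l) ((col_sum S C)%:~R : R) ^+ 2 <= (l * #|{: assignment f l}|)%:R.
Proof.
under eq_bigr do rewrite -rmorphXn.
rewrite -rmorph_sum var_col /= mulrz_nat ler_nat.
by rewrite leq_mul2r card_col orbT.
Qed.

Lemma part2_core f l : (0 < l)%nat -> exists M : column f l -> int,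
  #|{: assignment f l}|%:R * (ex (-1) / 4 / Num.sqrt (l%:R)) ^+ #|{: column f l}|
    <= (n_ze M)%:R.
Proof.
move=> lpos.
set s := Num.sqrt (l%:R : R).
have l1 : 1 <= (l%:R : R) by rewrite ler1n.
have s1 : 1 <= s by rewrite -sqrtr1 ler_sqrt // ler0n.
have s0 : 0 < s by lra.
have ss : s ^+ 2 = l%:R by rewrite sqr_sqrtr // ler0n.
set nT := #|{: assignment f l}|.
set n := #|{: column f l}|.
pose Y := fun S : assignment f l =>
  \sum_(C : column f l) (- (`|((col_sum S C)%:~R : R)| / s)).
have J : nT%:R * ex (- n%:R) <= \sum_S ex (Y S).
  apply: jensen.
  rewrite /Y exchange_big /=; under eq_bigr do rewrite sumrN; rewrite sumrN lerN2.
  have -> : nT%:R * n%:R = \sum_(C : column f l) (nT%:R : R).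
    by rewrite sumr_const mulr_natr.
  apply: ler_sum => C _.
  apply: le_trans (ler_sum _ (fun S _ => abs_div_le ((col_sum S C)%:~R) s0 ss)) _.
  rewrite -mulr_suml big_split /= sumr_const -mulr_suml.
  have v := var_real C.
  have : (\sum_S ((col_sum S C)%:~R : R) ^+ 2) / l%:R <= nT%:R.
    rewrite ler_pdivrMr; last by lra.
    by rewrite mulrC -natrM.
  move=> h; rewrite -/nT; lra.
set nmax := \big[maxn/0%nat]_(M : {ffun column f l -> 'I_(2 * l).+1}) n_ze (emb M).
pose w := fun z : int => ex (- (`|(z%:~R : R)| / s)).
have G : \sum_S ex (Y S) <= nmax%:R *
    \prod_(C : column f l) \sum_(k < (2 * l).+1) w ((k : nat)%:Z - l%:Z).
  rewrite (eq_bigr (fun S => \prod_C w (col_sum S C))); last by move=> S _; rewrite /Y ex_sum.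
  have := @group_bound f l w (fun z => ltW (ex_gt0 _)); exact.
have hB := B_bound l s1.
have B0 : 0 <= \sum_(k < (2 * l).+1) w ((k : nat)%:Z - l%:Z).
  by apply: sumr_ge0 => k _; exact: ltW (ex_gt0 _).
have P : \prod_(C : column f l) \sum_(k < (2 * l).+1) w ((k : nat)%:Z - l%:Z) <= (4 * s) ^+ n.
  by rewrite prodr_const; apply: lerXn2r => //; rewrite nnegrE //; lra.
have [M0 hM0] : exists M0 : {ffun column f l -> 'I_(2 * l).+1}, nmax = n_ze (emb M0).
  have hc : (0 < #|{: {ffun column f l -> 'I_(2 * l).+1}}|)%nat.
    by rewrite card_ffun card_ord expn_gt0.
  have [M0 hM0] := eq_bigmax' (fun M : {ffun column f l -> 'I_(2 * l).+1} => n_ze (emb M)) hc.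
  by exists M0.
exists (emb M0); rewrite -hM0.
have e1 : ex (-1) / 4 / s = ex (-1) / (4 * s) by rewrite invfM mulrA.
rewrite e1 expr_div_n mulrA.
have q : 0 < (4 * s) ^+ n by rewrite exprn_gt0 // mulr_gt0 //; lra.
rewrite ler_pdivrMr // exX mulNrn.
apply: le_trans J (le_trans G _).
by rewrite ler_wpM2l ?ler0n.
Qed.


Lemma card_T f l : #|{: assignment f l}| = expn 2 (expn l f).
Proof. by rewrite card_ffun card_bool card_ffun !card_ord. Qed.

Lemma card_C f l : (0 < f)%nat -> #|{: column f l}| = (f * expn l (f - 1))%nat.
Proof.
move=> hf; rewrite card_tagged.
have h : forall i : 'I_f, #|{: {ffun {a : 'I_f | a != i} -> 'I_l}}| = expn l (f - 1).
  by move=> i; rewrite card_ffun card_ord card_sig cardC1 card_ord subn1.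
rewrite (eq_map h).
have g : forall (r : seq 'I_f) (c : nat), sumn [seq c | _ <- r] = (size r * c)%nat.
  by move=> r c; elim: r => //= a r ->; rewrite mulSn.
by rewrite g size_enum_ord.
Qed.

Definition c0 : R := ex (-1) / 4.

Lemma c0_gt0 : 0 < c0.
Proof. rewrite /c0 IZRposE INRE; apply: divr_gt0; [exact: ex_gt0 | by rewrite ltr0n]. Qed.

Lemma c0E : c0 = ex (-1) / 4.
Proof. by rewrite /c0 IZRposE INRE. Qed.

Lemma final_ineq f l (N : nat) : (0 < f)%nat -> (0 < l)%nat ->
  #|{: assignment f l}|%:R * (ex (-1) / 4 / Num.sqrt (l%:R)) ^+ #|{: column f l}| <= N%:R ->
  2%:R ^+ nVars f l * (c0 / (f%:R * Num.sqrt (l%:R))) ^+ nCols f l <= N%:R.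
Proof.
move=> hf hl hM; apply: le_trans hM.
rewrite card_T natrX (card_C _ hf) -c0E.
apply: ler_wpM2l; first by rewrite exprn_ge0.
have s1 : 1 <= Num.sqrt (l%:R : R) by rewrite -[X in X <= _]sqrtr1 ler_sqrt ?ler0n // ler1n.
have f1 : 1 <= (f%:R : R) by rewrite ler1n.
have c0p := c0_gt0.
have fs : 0 < f%:R * Num.sqrt (l%:R : R) by rewrite mulr_gt0 //; lra.
have s0 : 0 < Num.sqrt (l%:R : R) by lra.
apply: lerXn2r.
- by rewrite nnegrE ltW // divr_gt0.
- by rewrite nnegrE ltW // divr_gt0.
rewrite ler_pdivrMr // (mulrC (f%:R)) mulrA divfK ?gt_eqF //.
rewrite -[X in X <= _]mulr1 ler_wpM2l //; first lra.
Qed.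
Close Scope ring_scope.

Theorem mainTheorem3 :
  (forall (f l : nat), (0 < f)%N -> (0 < l)%N ->
     forall M : column f l -> int,
       (0 < n_ze M)%N -> n_min M = n_ze M)
  /\
  (exists c : R, (0 < c)%R /\
     forall (f l : nat), (0 < f)%N -> (0 < l)%N ->
       exists M : column f l -> int,
         (pow 2 (nVars f l) * pow (c / (INR f * sqrt (INR l))) (nCols f l)
            <= INR (n_ze M))%R).
Proof.
split.
  by move=> f l _ _ M; exact: part1.
exists c0; split.
  by apply/RltP; exact: c0_gt0.
move=> f l hf hl.
have [M hM] := part2_core f hl.
exists M; apply/RleP.
rewrite !RpowE !INRE RsqrtE RdivE !RmultE IZRposE INRE.
exact: final_ineq hf hl hM.
Qed.
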